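(* Let $P$ be a $d$-polytope. If its slack ideal $I_P$ is a pure difference binomial ideal, then $I_P\subseteq T_P$.
   Context: Let $P\subset\mathbb{R}^d$ be a $d$-dimensional polytope with labelled vertices $\mathbf p_1,\dots,\mathbf p_v$ and labelled facets $F_1,\dots,F_f$. The symbolic slack matrix $S_P(\mathbf x)$ is the $v\times f$ matrix with a $0$ in entry $(i,j)$ if $\mathbf p_i\in F_j$ and a distinct variable $x_{ij}$ otherwise; let $x_1,\dots,x_t$ denote all these variables. The slack ideal is $I_P=\langle (d+2)\text{-minors of } S_P(\mathbf x)\rangle : (x_1\cdots x_t)^\infty\subseteq\mathbb{C}[x_1,\dots,x_t]$. An ideal is a pure difference binomial ideal if it is generated by binomials $\mathbf x^{\mathbf a}-\mathbf x^{\mathbf b}$ with $\mathbf a,\mathbf b\in\mathbb{Z}^t_{\ge0}$. The non-incidence graph $G_P$ is the bipartite graph on the vertices and facets of $P$ with an edge $\{\mathbf p_i,F_j\}$ iff $\mathbf p_i\notin F_j$ (labelled by $x_{ij}$). $T_P$ is the toric ideal of the vertex-edge incidence matrix of $G_P$, i.e. the kernel of the map $x_{ij}\mapsto s_iu_j$ into $\mathbb{C}[s_1^{\pm1},\dots,s_v^{\pm1},u_1^{\pm1},\dots,u_f^{\pm1}]$. *)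

(* Defs.v *)
From HB Require Import structures.
From mathcomp Require Import all_boot all_order all_algebra.
From mathcomp Require Import mpoly.
From mathcomp Require Import complex.
Set Implicit Arguments. Unset Strict Implicit. Unset Printing Implicit Defensive.
Import Order.TTheory GRing.Theory Num.Theory.
Local Open Scope ring_scope.

Section Ideals.
Variables (K : fieldType) (n : nat).

Definition ideal_gen (S : {mpoly K[n]} -> Prop) : {mpoly K[n]} -> Prop :=
  fun p => exists r : seq ({mpoly K[n]} * {mpoly K[n]}),
    (forall q, q \in r -> S q.2) /\ p = \sum_(q <- r) q.1 * q.2.

Definition saturation (I : {mpoly K[n]} -> Prop) (g : {mpoly K[n]}) :
  {mpoly K[n]} -> Prop := fun p => exists k : nat, I (g ^+ k * p).

Definition pure_difference_binomial (I : {mpoly K[n]} -> Prop) : Prop :=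
  exists G : 'X_{1..n} * 'X_{1..n} -> Prop,
    forall p, I p <->
      ideal_gen (fun q => exists ab, G ab /\ q = 'X_[ab.1] - 'X_[ab.2]) p.

Definition minors (k m1 m2 : nat) (M : 'M[{mpoly K[n]}]_(m1, m2)) :
  {mpoly K[n]} -> Prop :=
  fun q => exists (r : 'I_k -> 'I_m1) (c : 'I_k -> 'I_m2),
    {homo r : a b / (a < b)%N >-> (a < b)%N} /\
    {homo c : a b / (a < b)%N >-> (a < b)%N} /\
    q = \det (\matrix_(a, b) M (r a) (c b)).

End Ideals.

(* d-polytopes given by their labelled vertices (rows of V) and        *)
(* labelled facets (given by the sets of vertex labels they contain).  *)
Section Polytope.
Variables (R : realFieldType) (d v : nat).
Implicit Type V : 'M[R]_(v, d).

Definition lift_pts V : 'M[R]_(v, 1 + d) := row_mx (const_mx 1) V.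

(* rows of the homogenized matrix indexed by S; its rank is 1 + affine
   dimension of conv {p_i | i in S} *)
Definition rows_in V (S : {set 'I_v}) : 'M[R]_(v, 1 + d) :=
  \matrix_(i < v) (if i \in S then row i (lift_pts V) else 0).

(* the rows of V are exactly the vertices of the d-dimensional polytope
   P = conv(rows of V) in R^d: P is full-dimensional, and each p_i is a
   vertex, i.e. a 0-dimensional face (the unique maximizer of some linear
   functional over the p_j). *)
Definition is_dpolytope_vertices V : Prop :=
  \rank (lift_pts V) = d.+1 /\
  forall i : 'I_v, exists c : 'cV[R]_d,
    forall j : 'I_v, j != i -> (V *m c) j 0 < (V *m c) i 0.

(* S is the vertex set of a facet of P = conv(rows of V): the set of
   vertices on which a valid inequality a.x <= b is tight, of affine
   dimension d - 1. *)
Definition is_facet_set V (S : {set 'I_v}) : Prop :=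
  (exists (a : 'cV[R]_d) (b : R),
      (forall i, (V *m a) i 0 <= b) /\ S = [set i | (V *m a) i 0 == b]) /\
  \rank (rows_in V S) = d.

Definition facet_labelling (f : nat) V (F : 'I_f -> {set 'I_v}) : Prop :=
  injective F /\ forall S, is_facet_set V S <-> exists j, F j = S.

End Polytope.

Section Slack.
Variables (K : fieldType) (v f : nat) (F : 'I_f -> {set 'I_v}).

(* non-incident pairs (p_i not in F_j): they index the variables x_ij *)
Definition nonincid : {set 'I_v * 'I_f} := [set ij | ij.1 \notin F ij.2].

Definition nvars : nat := #|nonincid|.

Definition var_pair (k : 'I_nvars) : 'I_v * 'I_f := enum_val k.

(* symbolic slack matrix: 0 if p_i in F_j, the variable x_ij otherwise *)
Definition symb_slack : 'M[{mpoly K[nvars]}]_(v, f) :=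
  \matrix_(i, j)
    match [pick k : 'I_nvars | var_pair k == (i, j)] with
    | Some k => 'X_k
    | None => 0
    end.

Definition slack_ideal (d : nat) : {mpoly K[nvars]} -> Prop :=
  saturation (ideal_gen (minors (d.+2) symb_slack))
             (\prod_(k < nvars) 'X_k).

(* image of x_ij : s_i u_j, variables s_1..s_v,u_1..u_f *)
Definition toric_images : nvars.-tuple {mpoly K[v + f]} :=
  [tuple 'X_(lshift f (var_pair k).1) * 'X_(rshift v (var_pair k).2)
   | k < nvars].

Definition toric_ideal : {mpoly K[nvars]} -> Prop :=
  fun p => p \mPo toric_images = 0.

End Slack.

(* Main.v *)
Require Import Defs.
From HB Require Import structures.
From mathcomp Require Import all_boot all_order all_algebra.
From mathcomp Require Import mpoly.
From mathcomp Require Import complex.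
From mathcomp Require Import ring.
Set Implicit Arguments. Unset Strict Implicit. Unset Printing Implicit Defensive.
Import Order.TTheory GRing.Theory Num.Theory.
Local Open Scope ring_scope.

Lemma cancel_lemma (K : idomainType) n (a b : {mpoly K[n]}) k :
  a != 0 -> a ^+ k * b = 0 -> b = 0.
Proof. by move=> Ha /eqP; rewrite mulf_eq0 expf_eq0 (negbTE Ha) andbF => /eqP. Qed.

Theorem corollary3p5 (R : rcfType) (d v f : nat)
    (V : 'M[R]_(v, d)) (F : 'I_f -> {set 'I_v}) :
  is_dpolytope_vertices V ->
  facet_labelling V F ->
  pure_difference_binomial (@slack_ideal R[i] v f F d) ->
  forall p, @slack_ideal R[i] v f F d p -> @toric_ideal R[i] v f F p.
Proof.
move=> _ [_ HF] [G HG].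
have : forall j : 'I_f, exists ab : 'cV[R]_d * R,
    (forall i, (V *m ab.1) i 0 <= ab.2) /\ F j = [set i | (V *m ab.1) i 0 == ab.2].
  move=> j; have [[a [b [H1 H2]]] _] := (proj2 (HF (F j)) (ex_intro _ j erefl)).
  by exists (a, b).
case/fin_all_exists=> ab Hab.
pose Sl (i : 'I_v) (j : 'I_f) : R := (ab j).2 - (V *m (ab j).1) i 0.
have Sl0 i j : i \in F j -> Sl i j = 0.
  by rewrite /Sl (proj2 (Hab j)) inE => /eqP ->; rewrite subrr.
have Sln0 i j : i \notin F j -> Sl i j != 0.
  by rewrite (proj2 (Hab j)) inE /Sl subr_eq0 eq_sym.
pose nv := nvars F.
pose cc (x : R) : {mpoly R[i][v + f]} := (real_complex R x)%:MP.
have ccM x y : cc (x * y) = cc x * cc y by rewrite /cc !rmorphM.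
have ccB x y : cc (x - y) = cc x - cc y by rewrite /cc !rmorphB.
have cc_sum n (F0 : 'I_n -> R) : cc (\sum_(t < n) F0 t) = \sum_(t < n) cc (F0 t).
  by rewrite /cc !rmorph_sum.
pose Sc (k : 'I_nv) : R[i] := real_complex R (Sl (var_pair k).1 (var_pair k).2).
pose T := @toric_images R[i] v f F.
pose phi := [tuple (Sc k)%:MP * tnth T k | k < nv].
pose mon (a : 'X_{1..nv}) : 'X_{1..v+f} :=
  (\sum_(k < nv) (U_(lshift f (var_pair k).1) + U_(rshift v (var_pair k).2)) *+ a k)%MM.
have HT a : 'X_[a] \mPo T = 'X_[mon a].
  rewrite comp_mpolyX -mprodXnE; apply: eq_bigr => k _.
  by rewrite tnth_mktuple mpolyXD.
have Hphi a : 'X_[a] \mPo phi = (\prod_(k < nv) Sc k ^+ a k) *: 'X_[mon a].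
  rewrite -HT !comp_mpolyX -mul_mpolyC rmorph_prod -big_split /=.
  by apply: eq_bigr => k _; rewrite tnth_mktuple exprMn rmorphXn.
have Hc a : \prod_(k < nv) Sc k ^+ a k != 0.
  apply/prodf_neq0 => k _; rewrite expf_neq0 //.
  have := enum_valP k; rewrite inE => /Sln0.
  by apply: contra => /eqP H; apply/eqP; apply: (@complexI R); rewrite rmorph0.
have Hsym i j : symb_slack R[i] F i j \mPo phi
    = cc (Sl i j) * ('X_(lshift f i) * 'X_(rshift v j)).
  rewrite mxE; case: pickP => [k /eqP Hk | Hn].
    by rewrite comp_mpolyXU -tnth_nth tnth_mktuple /Sc tnth_mktuple Hk.
  have Hij : i \in F j.
    apply: contraT => Hij; have Hin : (i, j) \in nonincid F by rewrite inE.
    by have := Hn (enum_rank_in Hin (i, j)); rewrite /var_pair (enum_rankK_in Hin Hin) eqxx.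
  by rewrite comp_mpoly0 Sl0 // /cc !rmorph0 mul0r.
have Hmin q : minors d.+2 (symb_slack R[i] F) q -> q \mPo phi = 0.
  case=> r [c [_ [_ ->]]].
  pose s a : {mpoly R[i][v + f]} := 'X_(lshift f (r a)).
  pose u b : {mpoly R[i][v + f]} := 'X_(rshift v (c b)).
  pose Bm : 'M_(d.+2, 1 + (1 + d)) := row_mx 0 (row_mx (\col_a s a) (\matrix_(a, t) (s a * cc (V (r a) t)))).
  pose Cm : 'M_(1 + (1 + d), d.+2) := col_mx 0 (col_mx (\row_b (cc (ab (c b)).2 * u b)) (\matrix_(t, b) - (cc ((ab (c b)).1 t 0) * u b))).
  have -> : \det (\matrix_(a, b) symb_slack R[i] F (r a) (c b)) \mPo phi = \det (Bm *m Cm).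
    rewrite -det_map_mx; congr (\det _); apply/matrixP => a b.
    transitivity (cc (Sl (r a) (c b)) * (s a * u b)).
      rewrite -Hsym [LHS]mxE; congr (comp_mpoly phi _); exact: mxE.
    rewrite mul_row_col mul0mx add0r mul_row_col !mxE big_ord1 !mxE.
    rewrite (eq_bigr (fun t => - (s a * u b) * cc (V (r a) t * (ab (c b)).1 t 0))); last first.
      by move=> t _; rewrite !mxE ccM; ring.
    rewrite -mulr_sumr -cc_sum /Sl mxE ccB; ring.
  rewrite det_mulmx (expand_det_col Bm (lshift (1 + d) (ord0 : 'I_1))) big1 ?mul0r // => a _.
  have -> : Bm a (lshift (1 + d) (ord0 : 'I_1)) = 0 by rewrite /Bm row_mxEl mxE.
  by rewrite mul0r.
have Hg : (\prod_(k < nv) 'X_k) \mPo phi != 0.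
  rewrite mprodXE Hphi; apply/eqP => /(congr1 (mcoeff (mon (\sum_(k < nv) U_(k))%MM))).
  by rewrite mcoeffZ mcoeffX eqxx mulr1 mcoeff0; apply/eqP/Hc.
have Hsl p : slack_ideal d p -> p \mPo phi = 0.
  case=> k [r [Hr Heq]].
  have H0 : ((\prod_(k < nv) 'X_k) ^+ k * p) \mPo phi = 0.
    rewrite Heq rmorph_sum big_seq big1 // => q Hq.
    have Hq2 := Hr q Hq.
    rewrite rmorphM; change (comp_mpoly phi q.1 * comp_mpoly phi q.2 = (0 : {mpoly R[i][v+f]})).
    by rewrite (Hmin _ Hq2) mulr0.
  have E1 : comp_mpoly phi ((\prod_(k < nv) 'X_k) ^+ k * p) = (comp_mpoly phi (\prod_(k < nv) 'X_k)) ^+ k * comp_mpoly phi p.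
    by rewrite rmorphM rmorphXn.
  exact: (cancel_lemma Hg (etrans (esym E1) H0)).
have Hbin ab0 : G ab0 -> ('X_[ab0.1] - 'X_[ab0.2]) \mPo T = 0.
  move=> Gab; have : slack_ideal d ('X_[ab0.1] - 'X_[ab0.2] : {mpoly R[i][nv]}).
    apply/HG; exists [:: (1, 'X_[ab0.1] - 'X_[ab0.2])]; split.
      by move=> q; rewrite inE => /eqP -> /=; exists ab0.
    by rewrite big_seq1 mul1r.
  move/Hsl; rewrite raddfB /= !Hphi => /eqP; rewrite subr_eq0 => /eqP E.
  have Em : mon ab0.1 = mon ab0.2.
    have := congr1 (mcoeff (mon ab0.1)) E; rewrite !mcoeffZ !mcoeffX eqxx mulr1.
    case: eqP => [-> //|_]; rewrite mulr0 => /eqP; rewrite (negbTE (Hc _)).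
    by [].
  by rewrite raddfB /= !HT Em subrr.
move=> p /HG [r [Hr ->]]; rewrite /toric_ideal rmorph_sum big_seq big1 // => q Hq.
rewrite rmorphM; have [ab0 [Gab ->]] := Hr q Hq.
change (comp_mpoly T q.1 * comp_mpoly T ('X_[ab0.1] - 'X_[ab0.2]) = (0 : {mpoly R[i][v+f]})).
by rewrite (Hbin _ Gab) mulr0.
Qed.
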